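(* For every $n\ge 2$, the transition monoid of the automaton $\mathcal{V}_n$ is the full transformation monoid $T_n$ of its state set, and the reset threshold of $\mathcal{V}_n$ equals $\frac{n(n-1)}{2}$.
   Context: For a DFA $\langle Q,\Sigma,\delta\rangle$, the transition monoid is the monoid of transformations of $Q$ generated by the actions of the letters; $T_n$ denotes the monoid of all maps from an $n$-element set to itself. The reset threshold is the minimum length of a word $w$ with $|Q\cdot w|=1$ (words act letter by letter from left to right). The automaton $\mathcal{V}_n$ has states $q_0,\dots,q_{n-1}$ and letters $a_1,\dots,a_n$: for $1\le i\le n-1$, the letter $a_i$ swaps $q_{i-1}$ and $q_i$ and fixes all other states; the letter $a_n$ maps both $q_0$ and $q_1$ to $q_0$ and fixes $q_2,\dots,q_{n-1}$. *)

(* Defs.v *)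
From mathcomp Require Import all_boot.
Set Implicit Arguments. Unset Strict Implicit. Unset Printing Implicit Defensive.

Section DFA.
Variables (Q Sigma : finType) (delta : Q -> Sigma -> Q).

Definition act (w : seq Sigma) (q : Q) : Q := foldl delta q w.

Definition in_transition_monoid (f : Q -> Q) : Prop :=
  exists w : seq Sigma, forall q, act w q = f q.

Definition transition_monoid_is_full : Prop :=
  forall f : {ffun Q -> Q}, in_transition_monoid f.

Definition is_reset_word (w : seq Sigma) : bool :=
  #|[set act w q | q : Q]| == 1.

Definition reset_threshold_eq (k : nat) : Prop :=
  (exists w, is_reset_word w /\ size w = k) /\
  (forall w, is_reset_word w -> k <= size w).
End DFA.

(* The automaton V_n. States q_0..q_{n-1} are 'I_n; letter a_{i+1} is the
   ordinal i : 'I_n (so a_1..a_{n-1} are 0..n-2 and a_n is n-1).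
   V_nat gives the value (as a nat) of the image state. *)
Definition V_nat (n q a : nat) : nat :=
  if a.+1 < n then
    (if q == a then a.+1 else if q == a.+1 then a else q)
  else (if q == 1 then 0 else q).

(* The result of V_nat is always < n; insubd just packages it as an ordinal. *)
Definition V_delta (n : nat) (q a : 'I_n) : 'I_n := insubd q (V_nat n q a).

(* Main.v *)
Require Import Defs.
From mathcomp Require Import all_boot zify.
Set Implicit Arguments. Unset Strict Implicit. Unset Printing Implicit Defensive.

Lemma vdE m (q a : 'I_m.+2) : val (V_delta q a) = V_nat m.+2 q a.
Proof.
rewrite /V_delta val_insubd; case: ifP => // /negP []; rewrite /V_nat.
have := ltn_ord q; have := ltn_ord a.
case: ifP => H; repeat case: eqP => ?; lia.
Qed.

Lemma sw_nat_inv i x : (let f := fun y => if y == i then i.+1 else if y == i.+1 then i else y in f (f x)) = x.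
Proof.
rewrite /=.
case: (x =P i) => [->|h]; first by rewrite !eqxx (gtn_eqF (ltnSn i)).
case: (x =P i.+1) => [->|h']; first by rewrite eqxx.
by move/eqP/negPf: h => ->; move/eqP/negPf: h' => ->.
Qed.

Definition rz m (f : 'I_m.+2 -> 'I_m.+2) := in_transition_monoid (@V_delta m.+2) f.

Lemma rz_ext m (f g : 'I_m.+2 -> 'I_m.+2) : f =1 g -> rz f -> rz g.
Proof. by move=> e [w hw]; exists w => q; rewrite hw e. Qed.

Lemma rz_comp m (f g : 'I_m.+2 -> 'I_m.+2) : rz f -> rz g -> rz (fun q => g (f q)).
Proof.
move=> [w1 h1] [w2 h2]; exists (w1 ++ w2) => q.
by rewrite /act foldl_cat; move: (h1 q) (h2 (f q)); rewrite /act => -> ->.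
Qed.

Lemma rz_letter m (a : 'I_m.+2) : rz (fun q => V_delta q a).
Proof. by exists [:: a]. Qed.

Definition swp m (i j z : 'I_m.+2) := if z == i then j else if z == j then i else z.
Definition mrg m (i j z : 'I_m.+2) := if z == i then j else z.

Lemma swpv m i (hi : i.+1 < m.+2) (z : 'I_m.+2) :
  nat_of_ord (swp (inord i) (inord i.+1) z) =
  if nat_of_ord z == i then i.+1 else if nat_of_ord z == i.+1 then i else nat_of_ord z.
Proof.
rewrite /swp -!val_eqE /= !inordK //; try lia.
by case: (nat_of_ord z =P i) => _; [rewrite inordK //; lia|case: (nat_of_ord z =P i.+1) => _ //; rewrite inordK //; lia].
Qed.

Lemma rz_adj m i (hi : i.+1 < m.+2) : rz (@swp m (inord i) (inord i.+1)).
Proof.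
apply: rz_ext (rz_letter (inord i)) => q; apply: ord_inj.
rewrite swpv // vdE /V_nat inordK ?hi //; lia.
Qed.

Lemma rz_e10 m : rz (@mrg m (inord 1) (inord 0)).
Proof.
apply: rz_ext (rz_letter ord_max) => q; apply: val_inj.
rewrite vdE /V_nat /= ltnn /mrg -val_eqE /= inordK //.
by case: eqP => //; rewrite inordK.
Qed.
Lemma conj_gen m (F : 'I_m.+2 -> 'I_m.+2 -> 'I_m.+2 -> 'I_m.+2)
  (hF : forall i (hi : i.+1 < m.+2) a b z,
     let s := swp (inord i) (inord i.+1) in s (F (s a) (s b) (s z)) = F a b z)
  (h10 : rz (F (inord 1) (inord 0))) (h01 : rz (F (inord 0) (inord 1))) :
  forall a b, a != b -> rz (F a b).
Proof.
suff: forall k (a b : 'I_m.+2), nat_of_ord a + nat_of_ord b <= k -> a != b -> rz (F a b).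
  by move=> H a b; apply: H (leqnn _).
elim=> [|k IH] a b hk hab.
  have e : a = b by apply: val_inj; move: hk; rewrite /=; lia.
  by rewrite e eqxx in hab.
case: (leqP (nat_of_ord a + nat_of_ord b) 1) => h1.
  case: (eqVneq (nat_of_ord a) 0) => ha.
    have -> : a = inord 0 by apply: ord_inj => /=; rewrite inordK.
    have -> : b = inord 1; last by [].
    apply: ord_inj => /=; rewrite inordK //; move: hab; rewrite -(inj_eq (@ord_inj _)) => /eqP; lia.
  rewrite -lt0n in ha.
  have -> : a = inord 1 by apply: ord_inj => /=; rewrite inordK //; lia.
  have -> : b = inord 0 by apply: ord_inj => /=; rewrite inordK //; lia.
  by [].
have [i [hi hdec]] : exists i, i.+1 < m.+2 /\
   let s := @swp m (inord i) (inord i.+1) in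
   nat_of_ord (s a) + nat_of_ord (s b) <= k.
  have ha := ltn_ord a; have hb := ltn_ord b.
  have hab' : nat_of_ord a != nat_of_ord b by rewrite (inj_eq (@ord_inj _)).
  case: (ltnP ((minn a b).+1) (maxn a b)) => hd.
    exists (maxn a b).-1; split; first lia.
    rewrite /= !swpv; try lia.
    move/eqP: hab' => hab'; repeat (case: ifP => /eqP ?); lia.
  exists (minn a b).-1; split; first lia.
  rewrite /= !swpv; try lia.
  move/eqP: hab' => hab'; repeat (case: ifP => /eqP ?); lia.
set s := @swp m (inord i) (inord i.+1) in hdec.
have hs : involutive s.
  move=> z; apply: ord_inj; rewrite /s !swpv //; exact: sw_nat_inv.
have hsab : s a != s b by rewrite (inj_eq (inv_inj hs)).
have := IH _ _ hdec hsab => HI.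
apply: rz_ext (rz_comp (rz_comp (rz_adj hi) HI) (rz_adj hi)) => z.
exact: hF.
Qed.

Lemma conj_inv m (s : 'I_m.+2 -> 'I_m.+2) (hs : involutive s) :
  (forall a b z, s (swp (s a) (s b) (s z)) = swp a b z) /\
  (forall a b z, s (mrg (s a) (s b) (s z)) = mrg a b z).
Proof.
have si := inv_inj hs.
split=> a b z; rewrite /swp /mrg !(inj_eq si).
  by case: eqP => _; rewrite ?hs //; case: eqP => _; rewrite hs.
by case: eqP => _; rewrite hs.
Qed.

Lemma swp_inv m (a b : 'I_m.+2) : involutive (swp a b).
Proof.
move=> z; rewrite /swp.
case: (z =P a) => [->|na]; first by rewrite eqxx; case: eqP.
case: (z =P b) => [->|nb]; first by rewrite eqxx.
by move: na nb => /eqP/negPf -> /eqP/negPf ->.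
Qed.

Lemma lt12 m : 1 < m.+2. Proof. by []. Qed.

Lemma rz_swp m (a b : 'I_m.+2) : a != b -> rz (swp a b).
Proof.
apply: conj_gen => [i hi a' b' z||].
- exact: ((conj_inv (swp_inv (inord i) (inord i.+1))).1 a' b' z).
- apply: rz_ext (rz_adj (lt12 m)) => z; rewrite /swp.
  have n01 : (inord 0 : 'I_m.+2) != inord 1 by rewrite -(inj_eq (@ord_inj _)) !inordK.
  case: (z =P inord 0) => [->|h0]; first by rewrite (negPf n01).
  by case: (z =P inord 1).
- exact: (rz_adj (lt12 m)).
Qed.

Lemma rz_mrg m (a b : 'I_m.+2) : a != b -> rz (mrg a b).
Proof.
apply: conj_gen => [i hi a' b' z||].
- exact: ((conj_inv (swp_inv (inord i) (inord i.+1))).2 a' b' z).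
- exact: rz_e10.
- have hs := swp_inv (inord 0 : 'I_m.+2) (inord 1).
  apply: rz_ext (rz_comp (rz_comp (rz_adj (lt12 m)) (rz_e10 m))
     (rz_adj (lt12 m))) => z.
  have := (conj_inv hs).2 (inord 0) (inord 1) z.
  have e0 : swp (inord 0 : 'I_m.+2) (inord 1) (inord 0) = inord 1 by rewrite /swp eqxx.
  have e1 : swp (inord 0 : 'I_m.+2) (inord 1) (inord 1) = inord 0.
    rewrite /swp eqxx; case: eqP => // /(congr1 val); rewrite !inordK //.
  by rewrite e0 e1.
Qed.

Lemma rz_id m : rz (fun q : 'I_m.+2 => q).
Proof. by exists [::]. Qed.

Lemma fix0 m (f : 'I_m.+2 -> 'I_m.+2) q : [set x | f x != x] = set0 -> f q = q.
Proof.
move=> h; apply/eqP/negPn/negP => hq.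
have : q \in [set x | f x != x] by rewrite inE.
by rewrite h inE.
Qed.

Lemma rz_all m (f : 'I_m.+2 -> 'I_m.+2) : rz f.
Proof.
move: {2}#|[set x | f x != x]| (leqnn #|[set x | f x != x]|) => k.
elim: k f => [|k IH] f hk.
  apply: rz_ext (rz_id m) => q; rewrite fix0 //; apply: cards0_eq; lia.
have [hx|[x hx]] := set_0Vmem [set x | f x != x].
  by apply: rz_ext (rz_id m) => q; rewrite fix0.
rewrite inE in hx.
set y := f x.
have hxy : x != y by rewrite eq_sym.
have hyx : y != x by [].
case: (eqVneq (f y) y) => hy.
  pose g := fun z => if z == x then x else f z.
  have hg : #|[set z | g z != z]| <= k.
    rewrite -ltnS; apply: leq_trans hk; apply: proper_card; apply/properP; split.
      by apply/subsetP => z; rewrite !inE /g; case: (z =P x) => [->|]; rewrite ?eqxx.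
    by exists x; rewrite !inE /g ?eqxx.
  apply: rz_ext (rz_comp (rz_mrg hxy) (IH g hg)) => z.
  rewrite /mrg /g; case: (z =P x) => [->|hz]; first by rewrite (negPf hyx) hy.
  by rewrite (introF eqP hz).
pose g := fun z => swp x y (f z).
have hg : #|[set z | g z != z]| <= k.
  rewrite -ltnS; apply: leq_trans hk; apply: proper_card; apply/properP; split.
    apply/subsetP => z; rewrite !inE /g; apply: contraNN => /eqP hz.
    have zx : z != x by apply: contraNN hx => /eqP <-; rewrite hz.
    have zy : z != y by apply: contraNN hy => /eqP <-; rewrite hz.
    by rewrite hz /swp (negPf zx) (negPf zy).
  by exists x; rewrite !inE /g /swp -/y ?eqxx // (negPf hyx) eqxx.
apply: rz_ext (rz_comp (IH g hg) (rz_swp hxy)) => z.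
by rewrite /g swp_inv.
Qed.

Ltac desif := repeat match goal with
 | |- context [if ?b then _ else _] =>
     lazymatch b with context [if _ then _ else _] => fail | _ => let H := fresh in case H: b end end; try lia.

Lemma act_cat m (w1 w2 : seq 'I_m.+2) q :
  act (@V_delta m.+2) (w1 ++ w2) q = act (@V_delta m.+2) w2 (act (@V_delta m.+2) w1 q).
Proof. by rewrite /act foldl_cat. Qed.

Lemma act_rcons m (w : seq 'I_m.+2) a q :
  act (@V_delta m.+2) (rcons w a) q = V_delta (act (@V_delta m.+2) w q) a.
Proof. by rewrite /act foldl_rcons. Qed.

Fixpoint sw m k : seq 'I_m.+2 := if k is k'.+1 then inord k :: sw m k' else [::].
Definition blk m j : seq 'I_m.+2 := rcons (sw m j) ord_max.
Fixpoint W m j : seq 'I_m.+2 := if j is j'.+1 then W m j' ++ blk m j' else [::].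

Definition rot k x := if x == k.+1 then 1 else if (0 < x) && (x <= k) then x.+1 else x.

Lemma act_sw m k (q : 'I_m.+2) : k.+1 < m.+2 ->
  nat_of_ord (act (@V_delta m.+2) (sw m k) q) = rot k q.
Proof.
elim: k q => [|k IH] q hk.
  by rewrite /rot /=; (repeat (case: ifP => ?)); lia.
rewrite /= -/(act _ _ _) IH; last lia.
rewrite vdE /V_nat inordK //. have -> : (k.+2 < m.+2) = true by [].
have := ltn_ord q; move: (nat_of_ord q) => x hx.
case: (x =P k.+1) => [->|?]; [|case: (x =P k.+2) => [->|?]];
rewrite /rot; (repeat (case: ifP => ?)); lia.
lia. Qed.

Lemma act_W m j (q : 'I_m.+2) : j <= m.+1 ->
  nat_of_ord (act (@V_delta m.+2) (W m j) q) = if nat_of_ord q <= j then 0 else q.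
Proof.
elim: j q => [|j IH] q hj.
  by rewrite /=; case: ifP => ?; lia.
rewrite /= act_cat /blk act_rcons vdE /V_nat /= ltnn act_sw; last lia.
rewrite IH; last lia.
have := ltn_ord q; move: (nat_of_ord q) => x hx.
rewrite /rot; desif.
Qed.

Lemma size_W m j : (size (W m j)).*2 = j * j.+1.
Proof.
elim: j => [|j IH] //=.
rewrite size_cat /blk size_rcons.
have -> : size (sw m j) = j by elim: j {IH} => //= j ->.
rewrite doubleD IH; lia.
Qed.

Definition Tm m (S : {set 'I_m.+2}) (x : 'I_m.+2) := \sum_(y in S | y != x) nat_of_ord y.
Definition Phi m (S : {set 'I_m.+2}) := \max_(x in S) Tm S x.
Definition img m (w : seq 'I_m.+2) := [set act (@V_delta m.+2) w q | q : 'I_m.+2].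

Lemma T_split m (S : {set 'I_m.+2}) x : x \in S -> \sum_(y in S) nat_of_ord y = x + Tm S x.
Proof. by move=> xS; rewrite (bigD1 x). Qed.

Lemma sum_ind_le1 k (P : pred 'I_k) c : \sum_(y | P y) (y == c : nat) <= 1.
Proof.
case Pc: (P c).
  rewrite (bigD1 c) //= eqxx big1 // => y /andP[_ /negPf ->] //.
rewrite big1 // => y Py; case: eqP => // e; by rewrite -e Py in Pc.
Qed.

Lemma step_inj m (S : {set 'I_m.+2}) (g : 'I_m.+2 -> 'I_m.+2) (c : 'I_m.+2) :
  {in S &, injective g} -> (forall y, nat_of_ord y <= g y + (y == c)) ->
  Phi S <= Phi (g @: S) + 1.
Proof.
move=> ginj hg; apply/bigmax_leqP => x xS.
have gx : g x \in g @: S by apply: imset_f.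
apply: leq_trans (_ : Tm (g @: S) (g x) + 1 <= _); last first.
  by rewrite leq_add2r; apply: (leq_bigmax_cond (F := Tm (g @: S))).
have e : Tm (g @: S) (g x) = \sum_(y in S | y != x) nat_of_ord (g y).
  apply/eqP; rewrite -(eqn_add2l (g x)) -T_split // big_imset //= (bigD1 x) //.
rewrite e; apply: leq_trans (_ : \sum_(y in S | y != x) (nat_of_ord (g y) + (y == c)) <= _).
  exact: leq_sum.
by rewrite big_split /= leq_add2l sum_ind_le1.
Qed.

Lemma gmE m (q : 'I_m.+2) : V_delta q ord_max = if q == inord 1 then inord 0 else q.
Proof.
apply: ord_inj; rewrite vdE /V_nat /= ltnn -(inj_eq (@ord_inj _)) !inordK //.
by case: ifP => //; rewrite inordK.
Qed.

Lemma Phi_merge m (S : {set 'I_m.+2}) : inord 0 \in S -> inord 1 \in S ->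
  Phi S <= Phi (S :\ inord 1) + 1.
Proof.
move=> h0 h1.
have n01 : (inord 0 : 'I_m.+2) != inord 1 by rewrite -(inj_eq (@ord_inj _)) !inordK.
apply/bigmax_leqP => x xS.
case: (eqVneq x (inord 1)) => [->|hx].
  have h0' : inord 0 \in S :\ inord 1 by rewrite !inE n01.
  have e : Tm S (inord 1) = Tm (S :\ inord 1) (inord 0).
    rewrite /Tm; apply/eqP; rewrite -(eqn_add2l (nat_of_ord (inord 0 : 'I_m.+2))) -T_split //.
    rewrite inordK //= add0n; apply/eqP; apply: eq_bigl => y; rewrite !inE andbC //.
  rewrite e; apply: leq_trans (leq_addr _ _); exact: (leq_bigmax_cond (F := Tm (S :\ inord 1))).
have xS' : x \in S :\ inord 1 by rewrite !inE hx.
have e : Tm S x = 1 + Tm (S :\ inord 1) x.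
  rewrite /Tm (bigD1 (inord 1)) /=; last by rewrite h1 eq_sym.
  rewrite inordK //; congr (_ + _); apply: eq_bigl => y; rewrite !inE.
  by case: (y \in S); case: (y != x); case: (y != inord 1).
rewrite e addnC leq_add2r; exact: (leq_bigmax_cond (F := Tm (S :\ inord 1))).
Qed.

Lemma step_letter m (S : {set 'I_m.+2}) a : Phi S <= Phi ((fun q => V_delta q a) @: S) + 1.
Proof.
case: (ltnP a.+1 m.+2) => ha.
  apply: (step_inj (c := inord a.+1)).
    move=> y1 y2 _ _ e; apply: ord_inj; move: (congr1 (@nat_of_ord _) e); rewrite !vdE /V_nat ha.
    have := ltn_ord y1; have := ltn_ord y2.
    move: (nat_of_ord y1) (nat_of_ord y2) => u v hu hv; desif.
  move=> y; rewrite vdE /V_nat ha -(inj_eq (@ord_inj _)) inordK //.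
  move: (nat_of_ord y) => u; desif.
have -> : a = ord_max by apply: ord_inj => /=; have := ltn_ord a; lia.
under eq_imset do rewrite gmE.
have n01 : (inord 0 : 'I_m.+2) != inord 1 by rewrite -(inj_eq (@ord_inj _)) !inordK.
case h01: ((inord 0 \in S) && (inord 1 \in S)).
  case/andP: h01 => h0 h1.
  have -> : [set (if q == inord 1 then inord 0 else q) | q in S] = S :\ inord 1.
    apply/setP => z; rewrite !inE; apply/imsetP/andP.
      case=> y yS ->; case: (y =P inord 1) => [_|hy]; first by split.
      by split => //; apply/eqP.
    case=> z1 zS; exists z => //; by rewrite (negPf z1).
  exact: Phi_merge.
apply: (step_inj (c := inord 1)).
  move=> y1 y2 y1S y2S e.
  case: (y1 =P inord 1) e => [e1|n1]; case: (y2 =P inord 1) => [e2|n2] e.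
  - by rewrite e1 e2.
  - by subst; move: h01; rewrite y1S y2S.
  - by subst; move: h01; rewrite y1S y2S.
  - exact: e.
move=> y; case: (y =P inord 1) => [->|_]; last by rewrite leq_addr.
by rewrite !inordK.
Qed.

Lemma img_rcons m (w : seq 'I_m.+2) a : img (rcons w a) = (fun q => V_delta q a) @: img w.
Proof. by rewrite /img -imset_comp; apply: eq_imset => q; rewrite act_rcons. Qed.

Lemma Phi_img m (w : seq 'I_m.+2) : Phi (img ([::] : seq 'I_m.+2)) <= Phi (img w) + size w.
Proof.
elim/last_ind: w => [|w a IH]; first by rewrite addn0.
rewrite img_rcons size_rcons; apply: leq_trans IH _.
by rewrite addnS -addSn leq_add2r -addn1 step_letter.
Qed.

Lemma Phi1 m (x : 'I_m.+2) : Phi [set x] = 0.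
Proof.
apply/eqP; rewrite -leqn0; apply/bigmax_leqP => y /set1P ->.
by rewrite /Tm big1 // => z /andP[/set1P -> /eqP].
Qed.

Lemma Phi_T m : m.+2 * (m.+2 - 1) %/ 2 <= Phi (img ([::] : seq 'I_m.+2)).
Proof.
have -> : img ([::] : seq 'I_m.+2) = [set: 'I_m.+2].
  by apply/setP => z; rewrite inE; apply/imsetP; exists z.
apply: leq_trans (_ : Tm [set: 'I_m.+2] ord0 <= _); last by apply: (leq_bigmax_cond (F := Tm [set: 'I_m.+2])); rewrite in_setT.
have := T_split (in_setT (ord0 : 'I_m.+2)); rewrite /= add0n => <-.
have -> : \sum_(y in [set: 'I_m.+2]) nat_of_ord y = \sum_(y < m.+2) y.
  by apply: eq_bigl => y; rewrite inE.
rewrite -(big_mkord xpredT (fun i => i)) bin2_sum bin2 -divn2 subn1.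
by [].
Qed.

Theorem theorem3 (n : nat) (hn : 2 <= n) :
  transition_monoid_is_full (@V_delta n) /\
  reset_threshold_eq (@V_delta n) (n * (n - 1) %/ 2).
Proof.
case: n hn => [|[|m]] // _; split.
  by move=> f; exact: (rz_all (fun q => f q)).
split.
  exists (W m m.+1); split.
    rewrite /is_reset_word.
    have -> : [set act (@V_delta m.+2) (W m m.+1) q | q : 'I_m.+2] = [set ord0].
      apply/setP => z; rewrite inE; apply/imsetP/eqP => [[q _ ->]|->].
        apply: ord_inj; rewrite act_W //=; have := ltn_ord q; case: ifP => //; lia.
      exists ord0 => //; apply: ord_inj; rewrite act_W //.
    by rewrite cards1.
  by rewrite subn1 /= mulnC -(size_W m) -muln2 mulnK.
move=> w hw.
have := Phi_img w; have := Phi_T m.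
have [x hx] : exists x, img w = [set x] by apply/cards1P; exact: hw.
by rewrite hx Phi1 add0n; apply: leq_trans.
Qed.
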